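(* If $G$ is an extended $\mathcal C$-pair, then $\chi(G)\le\lceil\frac54\omega(G)\rceil$.
   Context: $\mathcal C$ is the class of $(P_4,C_4,2P_3)$-free graphs ($2P_3$: disjoint union of two copies of $P_3$). A graph is a $\mathcal C$-pair (with respect to a partition $(X,A)$ of its vertex set) if it is $P_6$-free and chordal, $A$ is a clique, $G[X]\in\mathcal C$, every vertex of $X$ has a neighbor in $A$, and any two non-adjacent vertices of $X$ have no common neighbor in $A$. A graph $G$ is an extended $\mathcal C$-pair if $V(G)$ can be partitioned into three sets $Q,X,A$ such that $G[X\cup A]$ is a $\mathcal C$-pair with respect to $(X,A)$, $Q$ is a clique, $Q$ is complete to $X$ (all edges present), and there are no edges between $Q$ and $A$. *)

(* Defs.v *)
(* Simple graphs: a symmetric irreflexive relation e on a finType T. *)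
From mathcomp Require Import all_boot.
Set Implicit Arguments. Unset Strict Implicit. Unset Printing Implicit Defensive.

Definition path_rel (k : nat) : rel 'I_k :=
  fun i j => (i.+1 == j :> nat) || (j.+1 == i :> nat).

Definition cycle_rel (k : nat) : rel 'I_k :=
  fun i j => path_rel i j
    || ((i == 0 :> nat) && (j == k.-1 :> nat))
    || ((j == 0 :> nat) && (i == k.-1 :> nat)).

Definition P4 : rel 'I_4 := @path_rel 4.
Definition C4 : rel 'I_4 := @cycle_rel 4.
Definition P6 : rel 'I_6 := @path_rel 6.
(* 2P3 : 0-1-2 and 3-4-5, disjoint *)
Definition twoP3 : rel 'I_6 :=
  fun i j => path_rel i j && ~~ ((minn i j == 2) && (maxn i j == 3)).

Section Graphs.
Variables (T : finType) (e : rel T).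

Definition has_induced_on (S : {set T}) (k : nat) (h : rel 'I_k) : Prop :=
  exists f : 'I_k -> T, [/\ injective f, (forall i, f i \in S) &
    (forall i j, i != j -> e (f i) (f j) = h i j)].

Definition induced_free_on (S : {set T}) (k : nat) (h : rel 'I_k) : Prop :=
  ~ has_induced_on S h.

Definition chordal_on (S : {set T}) : Prop :=
  forall k, 3 < k -> induced_free_on S (@cycle_rel k).

Definition in_classC (S : {set T}) : Prop :=
  [/\ induced_free_on S P4, induced_free_on S C4 & induced_free_on S twoP3].

Definition is_clique (S : {set T}) : bool :=
  [forall x in S, forall y in S, (x != y) ==> e x y].

Definition C_pair (X A : {set T}) : Prop :=
  [/\ [disjoint X & A],
      induced_free_on (X :|: A) P6 /\ chordal_on (X :|: A),
      is_clique A,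
      in_classC X &
      (forall x, x \in X -> exists2 a, a \in A & e x a) /\
      (forall x y, x \in X -> y \in X -> x != y -> ~~ e x y ->
         forall a, a \in A -> ~~ (e x a && e y a))].

Definition extended_C_pair : Prop :=
  exists Q X A : {set T},
    [/\ [&& [disjoint Q & X], [disjoint Q & A] & [disjoint X & A]],
        Q :|: X :|: A = [set: T],
        C_pair X A,
        is_clique Q &
        (forall q x, q \in Q -> x \in X -> e q x) /\
        (forall q a, q \in Q -> a \in A -> ~~ e q a)].

Definition omega : nat := \max_(S : {set T} | is_clique S) #|S|.

Definition colorable (k : nat) : bool :=
  [exists c : {ffun T -> 'I_k}, [forall x, forall y, e x y ==> (c x != c y)]].

Lemma colorable_card : irreflexive e -> exists k, colorable k.
Proof.
move=> irr; exists #|T|; apply/existsP; exists [ffun x => enum_rank x].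
apply/forallP=> x; apply/forallP=> y; apply/implyP=> exy; rewrite !ffunE.
apply/negP=> /eqP/enum_rank_inj exy'; by rewrite exy' irr in exy.
Qed.

Definition chi (irr : irreflexive e) : nat := ex_minn (colorable_card irr).

End Graphs.

(* Main.v *)
Require Import Defs.
From mathcomp Require Import all_boot.
From mathcomp Require Import zify.
Set Implicit Arguments. Unset Strict Implicit. Unset Printing Implicit Defensive.

Lemma laminar_hit (I T : finType) (B : nat) (F : I -> {set T}) (g : I -> nat) :
  (forall i j, [|| F i \subset F j, F j \subset F i | [disjoint F i & F j]]) ->
  (forall i, g i <= #|F i|) ->
  (forall P : {set I}, (forall i j, i \in P -> j \in P -> i != j -> [disjoint F i & F j]) ->
     \sum_(i in P) g i <= B) ->
  exists D : {set T}, #|D| <= B /\ forall i, g i <= #|D :&: F i|.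
Proof.
elim: B F g => [|B IH] F g lam gF fam.
  exists set0; split; first by rewrite cards0.
  move=> i; rewrite set0I cards0.
  have := fam [set i]; rewrite big_set1; apply => j k; rewrite !inE => /eqP -> /eqP ->.
  by rewrite eqxx.
case: (pickP (fun i => 0 < g i)) => [i1 gi1|g0]; last first.
  exists set0; split; first by rewrite cards0.
  by move=> i; have := g0 i; rewrite lt0n => /negbFE/eqP ->.
pose i0 := [arg min_(i < i1 | 0 < g i) #|F i|].
have [gi0 mini0] : 0 < g i0 /\ forall j, 0 < g j -> #|F i0| <= #|F j|.
  by rewrite /i0; case: arg_minnP => // i Hi Hmin; split=> // j /Hmin.
have : 0 < #|F i0| by apply: leq_trans gi0 (gF i0).
case/card_gt0P => a aF0.
pose F' i := F i :\ a.
pose g' i := g i - (a \in F i).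
have cF' i : #|F i| = (a \in F i) + #|F' i| by rewrite /F' -cardsD1.
have [D' [cD' hD']] : exists D : {set T}, #|D| <= B /\ forall i, g' i <= #|D :&: F' i|; last first.
exists (a |: D'); split.
  by rewrite cardsU1; case: (a \in D') => /=; lia.
move=> i; have := hD' i; rewrite /g'.
case aFi: (a \in F i) => /=; last first.
  move=> H; rewrite subn0 in H; apply: leq_trans H _; apply: subset_leq_card.
  by apply: setISS; [apply: subsetUr | apply: subD1set].
move=> H; have : g i <= #|a |: (D' :&: F' i)|.
  by rewrite cardsU1 !inE eqxx andbF /=; lia.
move/leq_trans; apply; apply: subset_leq_card; apply/subsetP => y.
rewrite !inE => /orP[/eqP->|/and3P[yD _ yF]]; first by rewrite eqxx aFi.
by rewrite yD yF orbT.
apply: IH.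
- move=> i j; case/or3P: (lam i j) => H.
  + by apply/or3P; constructor 1; apply: setSD.
  + by apply/or3P; constructor 2; apply: setSD.
  + by apply/or3P; constructor 3; apply: (disjointW (subD1set _ _) (subD1set _ _) H).
- move=> i; rewrite /g'; have := gF i; have := cF' i; case: (a \in F i) => /=; lia.
- move=> P disj.
  pose P' := [set i in P | 0 < g' i].
  have -> : \sum_(i in P) g' i = \sum_(i in P') g' i.
    rewrite (bigID (fun i => 0 < g' i)) /= [X in _ + X]big1 ?addn0; last first.
      by move=> i /andP[_]; rewrite lt0n negbK => /eqP.
    by apply: eq_bigl => i; rewrite inE.
  have gpos i : i \in P' -> 0 < g' i by rewrite inE => /andP[].
  have F'0 i : i \in P' -> F' i != set0.
    move=> /gpos; apply: contraTneq => E; have := gF i; rewrite cF' E cards0 /g'.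
    by case: (a \in F i) => /=; lia.
  have disjP : forall i j, i \in P' -> j \in P' -> i != j -> [disjoint F i & F j].
    move=> i j iP jP ij.
    have dF' : [disjoint F' i & F' j].
      by apply: disj => //; move: iP jP; rewrite !inE => /andP[] + _ /andP[].
    case/or3P: (lam i j) => H //.
    + have : [disjoint F' i & F' i] by apply: disjointWr dF'; rewrite /F' setSD.
      by move/disjoint_setI0; rewrite setIid => E; have := F'0 i iP; rewrite E eqxx.
    + have : [disjoint F' j & F' j] by apply: disjointWl dF'; rewrite /F' setSD.
      by move/disjoint_setI0; rewrite setIid => E; have := F'0 j jP; rewrite E eqxx.
  have famP' := fam P' disjP.
  case: (pickP [pred i | (i \in P') && (a \in F i)]) => [i /andP[iP aFi] | noa].
  + rewrite (bigD1 i) //= in famP'; rewrite (bigD1 i) //=.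
    have -> : \sum_(j in P' | j != i) g' j = \sum_(j in P' | j != i) g j.
      apply: eq_bigr => j /andP[jP ji]; rewrite /g'.
      have : a \notin F j.
        have ij : i != j by rewrite eq_sym.
        by apply/negP => aFj; have := disjP i j iP jP ij;
           move/disjoint_setI0/setP/(_ a); rewrite !inE aFi aFj.
      by move/negbTE ->; rewrite subn0.
    move: famP'; rewrite /g' aFi; have := gpos i iP; rewrite /g' aFi; lia.
  + have i0P : i0 \notin P'.
      by apply/negP => i0P; have := noa i0; rewrite /= i0P aF0.
    have := fam (i0 |: P'); rewrite big_setU1 //=.
    have -> : \sum_(j in P') g' j = \sum_(j in P') g j.
      apply: eq_bigr => j jP; rewrite /g'; have := noa j; rewrite /= jP /= => ->.
      by rewrite subn0.
    move=> H; suff : g i0 + \sum_(i in P') g i <= B.+1 by lia.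
    apply: H => j k; rewrite !in_setU1.
    have d0 j' : j' \in P' -> [disjoint F i0 & F j'].
      move=> jP; have aj : a \notin F j' by have := noa j'; rewrite /= jP /= => ->.
      case/or3P: (lam i0 j') => H //.
      * by move/subsetP: H => /(_ a aF0); rewrite (negbTE aj).
      * have gj : 0 < g j' by have := gpos j' jP; rewrite /g'; lia.
        have := mini0 j' gj => cc.
        have : F j' == F i0 by rewrite eqEcard H cc.
        by move/eqP => E; rewrite E aF0 in aj.
    move=> /orP[/eqP->|jP] /orP[/eqP->|kP]; rewrite ?eqxx //;
    first [ by move=> _; apply: d0 | by move=> _; rewrite disjoint_sym; apply: d0 | by apply: disjP].
Qed.

Lemma sum_card_disj (I T : finType) (P : {set I}) (F : I -> {set T}) :
  (forall i j, i \in P -> j \in P -> i != j -> [disjoint F i & F j]) ->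
  \sum_(i in P) #|F i| = #|\bigcup_(i in P) F i|.
Proof.
have [n leP] := ubnP #|P|; elim: n P leP => [|n IH] P leP dj; first by [].
case: (set_0Vmem P) => [->|[i iP]]; first by rewrite !big_set0 cards0.
rewrite (big_setD1 i iP) (big_setD1 i iP) /= IH.
- rewrite cardsU; suff -> : F i :&: \bigcup_(j in P :\ i) F j = set0 by rewrite cards0 subn0.
  apply/setP => a; rewrite !inE; apply/negP => /andP[aFi /bigcupP[j]].
  rewrite !inE => /andP[ji jP] aFj.
  have ij : i != j by rewrite eq_sym.
  have := dj i j iP jP ij; move/disjoint_setI0/setP/(_ a).
  by rewrite !inE aFi aFj.
- by rewrite (cardsD1 i P) iP in leP.
- by move=> j k; rewrite !inE => /andP[_ jP] /andP[_ kP]; apply: dj.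
Qed.

Lemma grow (T : finType) (D A : {set T}) k : D \subset A -> #|D| <= k -> k <= #|A| ->
  exists D2 : {set T}, [/\ D \subset D2, D2 \subset A & #|D2| = k].
Proof.
move=> DA; have [n len] := ubnP (k - #|D|); elim: n D DA len => [|n IH] D DA len Dk kA; first by [].
case: (ltngtP #|D| k) => [Dlt|Dgt|Deq]; [|lia|by exists D].
have : D \proper A by rewrite properEcard DA; apply: leq_trans Dlt kA.
case/properP => _ [a aA aD].
case: (IH (a |: D)) => [||||D2 [H1 H2 H3]].
- by rewrite subUset sub1set aA DA.
- by rewrite cardsU1 aD; lia.
- by rewrite cardsU1 aD; lia.
- exact: kA.
- by exists D2; split => //; apply: subset_trans H1; apply: subsetUr.
Qed.

Definition klt (T : finType) (key : T -> nat) (u v : T) :=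
  (key u < key v) || ((key u == key v) && (enum_rank u < enum_rank v)).

Lemma degen_color (T : finType) (e : rel T) (sym : symmetric e) (irr : irreflexive e) (key : T -> nat)
   (U : {set T}) (s : nat) :
  (forall v, v \in U -> #|[set u in U | e u v & klt key u v]| < s) ->
  exists col : T -> nat, (forall v, v \in U -> col v < s) /\
     (forall u v, u \in U -> v \in U -> e u v -> col u != col v).
Proof.
have [n leUn] := ubnP #|U|; elim: n U leUn => [|n IH] U leUn hU; first by [].
case: (set_0Vmem U) => [U0|[v0 v0U]].
  by exists (fun _ => 0); split => [v|u v]; rewrite U0 inE.
pose m := #|T|.
pose v := [arg max_(v > v0 in U) (key v * m + enum_rank v)].
have [vU vmax] : v \in U /\ forall u, u \in U -> u != v -> klt key u v.
  rewrite /v; case: arg_maxnP => // w wU wmax; split => // u uU uw.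
  have := wmax u uU; rewrite /klt.
  have ru : enum_rank u < m by rewrite /m ltn_ord.
  have rw : enum_rank w < m by rewrite /m ltn_ord.
  have : (enum_rank u : nat) != enum_rank w.
    by apply: contra uw => /eqP/val_inj/enum_rank_inj ->.
  move: ru rw; set ku := key u; set kw := key w; set a := (enum_rank u : nat); set b := (enum_rank w : nat).
  move=> ru rw /eqP ab H.
  apply/orP; case: (ltngtP ku kw) => E; [by left|exfalso; nia|right; apply/andP; split; [by apply/eqP|]].
  rewrite E in H; lia.
pose U' := U :\ v.
have c1 : #|U'| < n by rewrite (cardsD1 v U) vU in leUn.
have c2 : forall v, v \in U' -> #|[set u in U' | e u v & klt key u v]| < s.
  move=> w; rewrite !inE => /andP[wv wU]; apply: leq_ltn_trans (hU w wU).
  by apply: subset_leq_card; apply/subsetP => u; rewrite !inE => /and3P[/andP[_ ->] -> ->].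
have [col [colb colp]] := IH U' c1 c2.
pose Nb := [seq col u | u <- enum [set u in U' | e u v]].
have szNb : size Nb < s.
  rewrite size_map -cardE; apply: leq_ltn_trans (hU v vU).
  apply: subset_leq_card; apply/subsetP => u; rewrite !inE => /andP[/andP[uv uU] euv].
  by rewrite uU euv vmax.
have [i iS iN] : exists2 i, i < s & i \notin Nb.
  case: (boolP (all (mem Nb) (iota 0 s))) => [/allP H|/allPn [i]].
    have := uniq_leq_size (iota_uniq 0 s) H; rewrite size_iota => H'.
    by have := leq_ltn_trans H' szNb; rewrite ltnn.
  by rewrite mem_iota add0n => /= Hi Hn; exists i.
exists (fun u => if u == v then i else col u); split.
  move=> w wU; case: eqP => // /eqP wv; apply: colb; by rewrite !inE wv.
move=> u w uU wU euw.
case: (eqVneq u v) => [uv|uv]; case: (eqVneq w v) => [wv|wv].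
- by subst; rewrite irr in euw.
- subst u; rewrite ?eqxx ?(negbTE wv).
  have : col w \in Nb by apply: map_f; rewrite mem_enum !inE wv wU /= sym.
  by apply: contraTneq => <-.
- subst w; rewrite ?eqxx ?(negbTE uv).
  have : col u \in Nb by apply: map_f; rewrite mem_enum !inE uv uU /=.
  by apply: contraTneq => ->.
- by rewrite ?(negbTE uv) ?(negbTE wv); apply: colp => //; rewrite !inE ?uv ?wv.
Qed.

Section S.
Variables (T : finType) (e : rel T).
Hypothesis sym : symmetric e.
Hypothesis irr : irreflexive e.

Lemma mk_induced (S : {set T}) k (h : rel 'I_k) (s : seq T) (x0 : T) :
  size s = k -> uniq s -> {subset s <= S} ->
  (forall i j : 'I_k, i != j -> e (nth x0 s i) (nth x0 s j) = h i j) ->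
  has_induced_on e S h.
Proof.
move=> sz us sS hE; exists (fun i => nth x0 s i); split => //.
- move=> i j /eqP; rewrite nth_uniq ?sz //; by move/eqP/val_inj.
- by move=> i; apply: sS; apply: mem_nth; rewrite sz.
Qed.

Ltac contra_edges :=
  repeat match goal with
  | H : is_true (e ?a ?a) |- _ => by rewrite irr in H
  | H : is_true (e ?a ?b), H' : is_true (~~ e ?a ?b) |- _ => by rewrite H in H'
  | H : is_true (e ?a ?b), H' : is_true (~~ e ?b ?a) |- _ => by rewrite sym H in H'
  end.

Ltac solve_edge :=
  first [ assumption | (rewrite sym; assumption) | (apply/negbTE; assumption)
        | (rewrite sym; apply/negbTE; assumption) ].

Ltac uniq_tac := rewrite /= !inE !negb_or /= ?andbT;
  repeat (apply/andP; split); try assumption; try (rewrite eq_sym; assumption);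
  apply/eqP => E; subst; contra_edges.

Lemma P4_contra S u x z w : induced_free_on e S P4 ->
  u \in S -> x \in S -> z \in S -> w \in S ->
  e u x -> e x z -> e z w -> ~~ e u z -> ~~ e x w -> ~~ e u w -> False.
Proof.
move=> fr uS xS zS wS Eux Exz Ezw Nuz Nxw Nuw; apply: fr.
apply: (@mk_induced _ _ _ [:: u; x; z; w] u) => //.
- uniq_tac.
- by move=> y; rewrite !inE => /or4P [] /eqP ->.
- move=> [[|[|[|[|i]]]] Hi] [[|[|[|[|j]]]] Hj] //= Hij; rewrite /P4 /path_rel /=; try solve_edge.
Qed.

Lemma C4_contra S u x z w : induced_free_on e S C4 ->
  u \in S -> x \in S -> z \in S -> w \in S ->
  u != z -> x != w ->
  e u x -> e x z -> e z w -> e w u -> ~~ e u z -> ~~ e x w -> False.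
Proof.
move=> fr uS xS zS wS Duz Dxw Eux Exz Ezw Ewu Nuz Nxw; apply: fr.
apply: (@mk_induced _ _ _ [:: u; x; z; w] u) => //.
- uniq_tac.
- by move=> y; rewrite !inE => /or4P [] /eqP ->.
- move=> [[|[|[|[|i]]]] Hi] [[|[|[|[|j]]]] Hj] //= Hij; rewrite /C4 /cycle_rel /path_rel /=; try solve_edge.
Qed.

Lemma C5_contra S a b c d f : chordal_on e S ->
  a \in S -> b \in S -> c \in S -> d \in S -> f \in S ->
  e a b -> e b c -> e c d -> e d f -> e f a ->
  ~~ e a c -> ~~ e a d -> ~~ e b d -> ~~ e b f -> ~~ e c f -> False.
Proof.
move=> ch aS bS cS dS fS Eab Ebc Ecd Edf Efa Nac Nad Nbd Nbf Ncf.
apply: (ch 5 erefl).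
apply: (@mk_induced _ _ _ [:: a; b; c; d; f] a) => //.
- uniq_tac.
- by move=> y; rewrite !inE => /orP[/eqP->|/or4P [] /eqP ->].
- move=> [[|[|[|[|[|i]]]]] Hi] [[|[|[|[|[|j]]]]] Hj] //= Hij; rewrite /cycle_rel /path_rel /=; try solve_edge.
Qed.

Lemma cliqueP S : is_clique e S -> forall x y, x \in S -> y \in S -> x != y -> e x y.
Proof.
move=> /forallP H x y xS yS xy; have := H x; rewrite xS /= => /forallP /(_ y).
by rewrite yS xy.
Qed.

Variables (Q X A : {set T}).
Hypothesis dXA : [disjoint X & A].
Hypothesis chord : chordal_on e (X :|: A).
Hypothesis clA : is_clique e A.
Hypothesis P4X : induced_free_on e X P4.
Hypothesis C4X : induced_free_on e X C4.
Hypothesis hasA : forall x, x \in X -> exists2 a, a \in A & e x a.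
Hypothesis noC : forall x y, x \in X -> y \in X -> x != y -> ~~ e x y ->
  forall a, a \in A -> ~~ (e x a && e y a).

Definition NXc x := x |: [set y in X | e x y].
Definition NA x := [set a in A | e x a].

Lemma XA_neq x a : x \in X -> a \in A -> x != a.
Proof. by move=> xX aA; apply: contraTneq xX => ->; rewrite (disjointFl dXA aA). Qed.

Lemma inXA_X x : x \in X -> x \in X :|: A.
Proof. by move=> xX; rewrite inE xX. Qed.
Lemma inXA_A x : x \in A -> x \in X :|: A.
Proof. by move=> xX; rewrite inE xX orbT. Qed.

Lemma noC' x y a : x \in X -> y \in X -> x != y -> ~~ e x y -> a \in A -> e x a -> ~~ e y a.
Proof. by move=> xX yX xy nxy aA exa; have := noC xX yX xy nxy aA; rewrite exa. Qed.

Lemma L1 x z : x \in X -> z \in X -> e x z -> (NXc x \subset NXc z) || (NXc z \subset NXc x).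
Proof.
move=> xX zX exz; case: (boolP (NXc x \subset NXc z)) => //= /subsetPn [u uNx uNz].
apply/subsetP => w wNz; apply/negPn/negP => wNx.
move: uNx uNz wNz wNx; rewrite !inE.
case/orP => [/eqP ->|/andP[uX exu]]; first by rewrite xX sym exz orbT.
rewrite uX /= negb_or => /andP[uz nzu].
case/orP => [/eqP wz|/andP[wX ezw]]; first by subst w; rewrite zX exz orbT.
rewrite wX /= negb_or => /andP[wx nxw].
case euw: (e u w).
- apply: (C4_contra C4X uX xX zX wX uz _ _ exz ezw _ _ nxw) => //.
  + by rewrite eq_sym.
  + by rewrite sym.
  + by rewrite sym.
  + by rewrite sym.
- apply: (P4_contra P4X uX xX zX wX _ exz ezw _ nxw) => //.
  + by rewrite sym.
  + by rewrite sym.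
  + by rewrite euw.
Qed.

Lemma L2 x z : x \in X -> z \in X -> e x z -> (NA x \subset NA z) || (NA z \subset NA x).
Proof.
move=> xX zX exz; case: (boolP (NA x \subset NA z)) => //= /subsetPn [a aNx aNz].
apply/subsetP => b bNz; apply/negPn/negP => bNx.
move: aNx aNz bNz bNx; rewrite !inE => /andP[aA exa]; rewrite aA /= => nza.
move=> /andP[bA ezb]; rewrite bA /= => nxb.
have ab : a != b by apply: contraNneq nza => ->.
apply: (C4_contra (@chord 4 erefl) (inXA_X xX) (inXA_A aA) (inXA_A bA) (inXA_X zX)
   (XA_neq xX bA) _ exa (cliqueP clA aA bA ab) _ _ nxb _) => //.
- by rewrite eq_sym XA_neq.
- by rewrite sym.
- by rewrite sym.
- by rewrite sym.
Qed.

Lemma L3 x z : x \in X -> z \in X -> e x z -> ~~ (NXc z \subset NXc x) -> NA x \subset NA z.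
Proof.
move=> xX zX exz /subsetPn [y yNz yNx].
move: yNz yNx; rewrite !inE.
case/orP => [/eqP ->|/andP[yX ezy]]; first by rewrite zX exz orbT.
rewrite yX /= negb_or => /andP[yx nxy].
have [b bA eyb] := hasA yX.
have xy : x != y by rewrite eq_sym.
have nxb : ~~ e x b by apply: (noC' (y := x) yX xX yx _ bA eyb); rewrite sym.
apply/subsetP => a; rewrite !inE => /andP[aA exa]; rewrite aA /=.
apply/negPn/negP => nza.
have nya : ~~ e y a by apply: (noC' xX yX xy nxy aA exa).
have ab : a != b by apply: contraNneq nya => ->.
case ebz: (e b z).
- apply: (C4_contra (@chord 4 erefl) (inXA_A aA) (inXA_A bA) (inXA_X zX) (inXA_X xX)
     _ _ (cliqueP clA aA bA ab) ebz _ _ _ _) => //.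
  + by rewrite eq_sym XA_neq.
  + by rewrite eq_sym XA_neq.
  + by rewrite sym.
  + by rewrite sym.
  + by rewrite sym.
- apply: (C5_contra chord (inXA_X xX) (inXA_A aA) (inXA_A bA) (inXA_X yX) (inXA_X zX)
     exa (cliqueP clA aA bA ab) _ _ _ nxb nxy _ _) => //.
  + by rewrite sym.
  + by rewrite sym.
  + by rewrite sym.
  + by rewrite sym.
  + by rewrite sym.
  + by rewrite ebz.
Qed.


Hypothesis dQX : [disjoint Q & X].
Hypothesis clQ : is_clique e Q.
Hypothesis QX : forall q x, q \in Q -> x \in X -> e q x.

Definition rX x := #|NXc x|.
Definition nA x := #|NA x|.
Definition key x := if x \in X then (#|T| - rX x) * #|T|.+1 + (#|T| - nA x) + 1 else 0.
Definition BX x := [set z in X | e z x & klt key z x].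

Lemma key_le z x : z \in X -> x \in X -> key z <= key x ->
  rX x <= rX z /\ (rX x = rX z -> nA x <= nA z).
Proof.
rewrite /key => -> ->.
have := max_card (mem (NXc x)); have := max_card (mem (NXc z)).
have := max_card (mem (NA x)); have := max_card (mem (NA z)).
rewrite /rX /nA; move: #|NXc x| #|NXc z| #|NA x| #|NA z| #|T| => a b c d n.
move=> H1 H2 H3 H4 H5; split; [|move=> E]; nia.
Qed.

Lemma K z x : z \in X -> x \in X -> e z x -> klt key z x ->
  NXc x \subset NXc z /\ NA x \subset NA z.
Proof.
move=> zX xX ezx kl.
have kle : key z <= key x by move: kl; rewrite /klt => /orP[/ltnW//|/andP[/eqP-> _]].
have [r1 r2] := key_le zX xX kle.
have exz : e x z by rewrite sym.
have NXs : NXc x \subset NXc z.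
  case/orP: (L1 xX zX exz) => // H.
  have : NXc z == NXc x by rewrite eqEcard H.
  by move/eqP ->.
split => //.
case: (boolP (NXc z \subset NXc x)) => H; last by apply: L3.
have E : rX x = rX z.
  by apply/eqP; rewrite eqn_leq r1 /rX subset_leq_card.
have n1 := r2 E.
case/orP: (L2 xX zX exz) => // H'.
have : NA z == NA x by rewrite eqEcard H'.
by move/eqP ->.
Qed.

Lemma BXP x z : z \in BX x -> [/\ z \in X, e z x, NXc x \subset NXc z & NA x \subset NA z].
Proof.
rewrite inE => /and3P[zX ezx kl].
have xX : x \in X.
  by apply: contraLR kl => xX; rewrite /klt /key (negbTE xX) zX addn1.
by have [H1 H2] := K zX xX ezx kl; split.
Qed.

Lemma BX_edge x z1 z2 : z1 \in BX x -> z2 \in BX x -> z1 != z2 -> e z1 z2.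
Proof.
move=> /BXP[_ e1 s1 _] /BXP[z2X e2 _ _] z12.
have : z2 \in NXc z1 by apply: (subsetP s1); rewrite !inE z2X sym e2 orbT.
by rewrite !inE eq_sym (negbTE z12) /= => /andP[].
Qed.

Lemma cliqueBX x : x \in X -> is_clique e (x |: (BX x :|: NA x)).
Proof.
move=> xX; apply/forallP => u; apply/implyP => uS; apply/forallP => v; apply/implyP => vS.
apply/implyP => uv.
have xz z : z \in BX x -> e x z by case/BXP => _ ezx _ _; rewrite sym.
have xa a : a \in NA x -> e x a by rewrite inE => /andP[].
have za z a : z \in BX x -> a \in NA x -> e z a.
  by case/BXP => _ _ _ /subsetP H /H; rewrite inE => /andP[].
have aA a : a \in NA x -> a \in A by rewrite inE => /andP[].
move: uS vS uv; rewrite !in_setU1 !in_setU.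
case/orP => [/eqP->|/orP[uB|uN]]; case/orP => [/eqP->|/orP[vB|vN]]; rewrite ?eqxx // => uv;
 first [ by apply: xz | by apply: xa | by rewrite sym; apply: xz | exact: (BX_edge uB vB uv)
       | by apply: za | by rewrite sym; apply: xa | by rewrite sym; apply: za
       | exact: (cliqueP clA (aA _ uN) (aA _ vN) uv) ].
Qed.


Lemma omega_ge S : is_clique e S -> #|S| <= omega e.
Proof. by move=> H; apply: (leq_bigmax_cond (F := fun S : {set T} => #|S|) S H). Qed.

Lemma xNA x : x \in X -> x \notin NA x.
Proof. by move=> xX; rewrite inE (disjointFr dXA xX). Qed.

Lemma xBX x : x \notin BX x.
Proof. by rewrite inE irr andbF. Qed.

Lemma card_BX x : x \in X -> #|x |: (BX x :|: NA x)| = (#|BX x|).+1 + #|NA x|.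
Proof.
move=> xX; rewrite cardsU1 in_setU (negbTE (xBX x)) (negbTE (xNA xX)) /= cardsU.
suff -> : BX x :&: NA x = set0 by rewrite cards0 subn0 add1n.
apply/setP => y; rewrite !inE; apply/negP => /andP[/and3P[yX _ _] /andP[yA _]].
by rewrite (disjointFr dXA yX) in yA.
Qed.

Lemma cliqueQBX x : x \in X -> is_clique e (Q :|: (x |: BX x)).
Proof.
move=> xX; apply/forallP => u; apply/implyP => uS; apply/forallP => v; apply/implyP => vS.
apply/implyP => uv.
have xz z : z \in BX x -> e x z by case/BXP => _ ezx _ _; rewrite sym.
have zX z : z \in BX x -> z \in X by case/BXP.
move: uS vS uv; rewrite !in_setU !in_set1.
case/orP => [uQ|/orP[/eqP->|uB]]; case/orP => [vQ|/orP[/eqP->|vB]]; rewrite ?eqxx // => uv;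
 first [ exact: (cliqueP clQ uQ vQ uv) | exact: (QX uQ xX) | exact: (QX uQ (zX _ vB))
       | by rewrite sym; exact: (QX vQ xX) | by rewrite sym; exact: (QX vQ (zX _ uB))
       | exact: (xz _ vB) | by rewrite sym; exact: (xz _ uB) | exact: (BX_edge uB vB uv) ].
Qed.

Lemma card_QBX x : x \in X -> #|Q :|: (x |: BX x)| = #|Q| + (#|BX x|).+1.
Proof.
move=> xX; rewrite cardsU cardsU1 (xBX x) add1n.
suff -> : Q :&: (x |: BX x) = set0 by rewrite cards0 subn0.
apply/setP => y; rewrite !inE; apply/negP => /andP[yQ].
case/orP => [/eqP yx|/and3P[yX _ _]].
  by subst y; rewrite (disjointFr dQX yQ) in xX.
by rewrite (disjointFr dQX yQ) in yX.
Qed.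

Hypothesis cover : Q :|: X :|: A = setT.
Hypothesis QA : forall q a, q \in Q -> a \in A -> ~~ e q a.

Lemma index_eq_inj (s : seq T) u v : u \in s -> v \in s -> index u s = index v s -> u = v.
Proof. by move=> us vs E; rewrite -(nth_index u us) E nth_index. Qed.

Lemma main_color : colorable e ((5 * omega e + 3) %/ 4).
Proof.
set w := omega e.
pose c := (w + 3) %/ 4.
have c4 : w <= 4 * c.
  have := divn_eq (w + 3) 4; have := ltn_pmod (w + 3) (isT : 0 < 4); rewrite /c; lia.
pose h x := (#|BX x|).+1.
pose t := \max_(x in X) h x.
have hle x : x \in X -> h x <= t by move=> xX; apply: (leq_bigmax_cond (F := h) x xX).
have hA x : x \in X -> h x + #|NA x| <= w.
  by move=> xX; rewrite /h -card_BX //; apply: omega_ge; apply: cliqueBX.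
have Qw : #|Q| <= w by apply: omega_ge.
have Qt : #|Q| + t <= w.
  suff : t <= w - #|Q| by lia.
  apply/bigmax_leqP => x xX; have := omega_ge (cliqueQBX xX); rewrite card_QBX // /h; lia.
have Aw : #|A| <= w by apply: omega_ge.
pose F x := if x \in X then NA x else set0.
pose g x := if x \in X then (#|NA x| + h x) - (t + c) else 0.
have [D [Dc Dh]] : exists D : {set T}, #|D| <= w - t /\ forall i, g i <= #|D :&: F i|.
  apply: laminar_hit.
  - move=> i j; rewrite /F; case iX: (i \in X); case jX: (j \in X); rewrite ?sub0set ?orbT //.
    case: (eqVneq i j) => [->|ij]; first by rewrite subxx.
    case eij: (e i j).
      by case/orP: (L2 iX jX eij) => ->; rewrite ?orbT.
    apply/or3P; constructor 3; rewrite -setI_eq0; apply/eqP/setP => a; rewrite !inE.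
    apply/negP => /andP[/andP[aA eia] /andP[_ eja]].
    by have := noC iX jX ij (negbT eij) aA; rewrite eia eja.
  - move=> i; rewrite /g /F; case iX: (i \in X) => //; have := hle i iX; lia.
  - move=> P dj.
    pose P' := [set i in P | 0 < g i].
    have -> : \sum_(i in P) g i = \sum_(i in P') g i.
      rewrite (bigID (fun i => 0 < g i)) /= [X in _ + X]big1 ?addn0; last first.
        by move=> i /andP[_]; rewrite lt0n negbK => /eqP.
      by apply: eq_bigl => i; rewrite inE.
    have gpos i : i \in P' -> 0 < g i by rewrite inE => /andP[].
    have P'X i : i \in P' -> i \in X.
      by move/gpos; rewrite /g; case: (i \in X).
    have P'P i : i \in P' -> i \in P by rewrite inE => /andP[].
    have S1 : \sum_(i in P') g i + #|P'| * c <= w.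
      rewrite -sum_nat_const -big_split /=; apply: leq_trans Aw.
      apply: (@leq_trans (\sum_(i in P') #|F i|)).
        apply: leq_sum => i iP'; have xX := P'X i iP'; have := gpos i iP'.
        rewrite /g /F xX; have := hle i xX; lia.
      rewrite sum_card_disj; last by move=> i j iP jP; apply: dj; apply: P'P.
      apply: subset_leq_card; apply/subsetP => a /bigcupP [i iP'].
      by rewrite /F (P'X _ iP') inE => /andP[].
    have S2 : \sum_(i in P') g i <= #|P'| * (w - t - c).
      rewrite -sum_nat_const; apply: leq_sum => i iP'; have xX := P'X i iP'.
      rewrite /g xX; have := hA i xX; lia.
    move: S1 S2; set S := \sum_(i in P') g i; set m := #|P'| => S1 S2.
    have tw : t <= w by lia.
    have : m = 0 \/ m = 1 \/ m = 2 \/ m = 3 \/ 4 <= m by lia.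
    case=> [E|[E|[E|[E|E]]]]; rewrite ?E in S1 S2; try lia.
    have : 4 * c <= m * c by rewrite leq_mul2r E orbT.
    lia.
pose D1 := D :&: A.
have D1k : #|D1| <= minn #|A| (w - t).
  rewrite leq_min; apply/andP; split; first by apply: subset_leq_card; apply: subsetIr.
  by apply: leq_trans (subset_leq_card (subsetIl D A)) Dc.
have [D2 [D12 D2A D2c]] := grow (subsetIr D A) D1k (geq_minl _ _).
have hit x : x \in X -> #|NA x :\: D2| + h x <= t + c.
  move=> xX; have := Dh x; rewrite /g /F xX => H.
  have : #|D :&: NA x| <= #|D2 :&: NA x|.
    apply: subset_leq_card; apply/subsetP => y; rewrite !inE => /andP[yD /andP[yA exy]].
    rewrite exy yA !andbT; apply: (subsetP D12); by rewrite /D1 !inE yD yA.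
  have := cardsID D2 (NA x); rewrite setIC; lia.
pose I := A :\: D2.
pose U := X :|: I.
pose s := t + c.
have cardI : #|I| <= t.
  rewrite /I cardsD (setIidPr D2A) D2c; lia.
have [col [colb colp]] : exists col : T -> nat, (forall v, v \in U -> col v < s) /\
     (forall u v, u \in U -> v \in U -> e u v -> col u != col v).
  apply: (degen_color sym irr (key := key)) => v vU.
  case vX: (v \in X).
    apply: (@leq_ltn_trans #|(NA v :\: D2) :|: BX v|).
      apply: subset_leq_card; apply/subsetP => u; rewrite !inE => /and3P[uU euv kl].
      move: uU => /orP[uX|/andP[uD uA]].
        by rewrite uX euv kl !orbT.
      by rewrite uD uA sym euv.
    rewrite cardsU; have := hit v vX; rewrite /h /s; lia.
  have vI : v \in I by move: vU; rewrite /U inE vX.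
  apply: (@leq_ltn_trans #|I :\ v|).
    apply: subset_leq_card; apply/subsetP => u; rewrite !inE => /and3P[uU euv kl].
    move: uU => /orP[uX|/andP[uD uA]].
      by move: kl; rewrite /klt /key uX vX addn1.
    rewrite uD uA /= ?andbT; apply: contraTneq euv => ->; by rewrite irr.
  have := cardsD1 v I; rewrite vI /s /=; lia.
pose colr v := if v \in U then col v else if v \in D2 then s + index v (enum D2)
               else s + index v (enum Q).
have Nw : (5 * w + 3) %/ 4 = s + (w - t).
  have -> : 5 * w + 3 = w * 4 + (w + 3) by lia.
  rewrite divnMDl // -/c /s; lia.
have inQ v : v \notin U -> v \notin D2 -> v \in Q.
  move=> vU vD; have : v \in Q :|: X :|: A by rewrite cover inE.
  move: vU; rewrite /U /I !inE (negbTE vD) /= negb_or => /andP[/negbTE -> /negbTE ->].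
  by rewrite !orbF.
have colrb v : colr v < s + (w - t).
  rewrite /colr; case: ifP => vU; first by have := colb v vU; lia.
  case: ifP => vD; rewrite ltn_add2l.
    by apply: leq_trans (_ : #|D2| <= _); [rewrite cardE index_mem mem_enum | rewrite D2c geq_minr].
  apply: leq_trans (_ : #|Q| <= _); first by rewrite cardE index_mem mem_enum inQ ?vU ?vD.
  lia.
have colrp u v : e u v -> colr u != colr v.
  move=> euv; have uv : u != v by apply: contraTneq euv => ->; rewrite irr.
  rewrite /colr; case uU: (u \in U); case vU: (v \in U).
  - by apply: colp.
  - by have H := colb u uU; case: ifP => _; rewrite neq_ltn (leq_trans H (leq_addr _ _)).
  - by have H := colb v vU; case: ifP => _; rewrite neq_ltn (leq_trans H (leq_addr _ _)) orbT.
  - have uQ := inQ u (negbT uU); have vQ := inQ v (negbT vU).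
    case uD: (u \in D2); case vD: (v \in D2).
    + apply/negP => /eqP /addnI /index_eq_inj E.
      by move: uv; rewrite E ?mem_enum ?eqxx.
    + by have := QA (vQ (negbT vD)) (subsetP D2A u uD); rewrite sym euv.
    + by have := QA (uQ (negbT uD)) (subsetP D2A v vD); rewrite euv.
    + have uQ' : u \in enum Q by rewrite mem_enum uQ ?uD.
      have vQ' : v \in enum Q by rewrite mem_enum vQ ?vD.
      apply/negP => /eqP /addnI E.
      by rewrite (index_eq_inj uQ' vQ' E) eqxx in uv.
rewrite Nw.
case: (pickP (fun _ : T => true)) => [x0 _|T0]; last first.
  apply/existsP; have T00 : #|T| = 0 by apply: eq_card0 => x; have := T0 x.
  exists (ffun0 T00); apply/forallP => x; by have := T0 x.
have := colrb x0; case E: (s + (w - t)) => [//|N'] _.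
apply/existsP; exists [ffun v => inord (colr v) : 'I_N'.+1].
apply/forallP => x; apply/forallP => y; apply/implyP => exy; rewrite !ffunE.
apply: contra (colrp x y exy) => /eqP E'.
have := congr1 (@nat_of_ord _) E'; rewrite !inordK ?E //; first by move=> ->.
  by rewrite -E colrb.
by rewrite -E colrb.
Qed.
End S.

Theorem lemma5p14 (T : finType) (e : rel T) (sym : symmetric e) (irr : irreflexive e) :
  extended_C_pair e -> chi irr <= (5 * omega e + 3) %/ 4.
Proof.
move=> [Q [X [A [/and3P[dQX dQA dXA] cover [_ [_ chord] clA [P4X C4X _] [hasA noC]] clQ [QX QA]]]]].
rewrite /chi; case: ex_minnP => m _ minm; apply: minm.
exact: (main_color sym irr dXA chord clA P4X C4X hasA noC dQX clQ QX cover QA).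
Qed.
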